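(* Let $A\in\mathbb{C}$ and expand $$\exp\Big(v\Big(\frac{\mathcal{S}(v\hbar\partial_y)}{\mathcal{S}(\hbar\partial_y)}-1\Big)\log(y-A)\Big)=\sum_{k\ge0}\hbar^{2k}c_{2k}(v,y).$$ Then $c_0(v,y)=1$, and for every $k\ge1$ $$c_{2k}(v,y)=\frac{(v+1)v(v-1)\cdots(v-2k+1)}{(y-A)^{2k}}\,p_{2k}(v)$$ for some polynomial $p_{2k}(v)\in\mathbb{C}[v]$.
   Context: $\mathcal{S}(u)=(e^{u/2}-e^{-u/2})/u$; the operator $\mathcal{S}(v\hbar\partial_y)/\mathcal{S}(\hbar\partial_y)$ is understood as its power series in $\hbar\partial_y$ (with coefficients polynomial in $v$), acting on $\log(y-A)$ termwise. *)

(* Defs.v *)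
From mathcomp Require Import all_boot all_order all_algebra all_field.
Set Implicit Arguments. Unset Strict Implicit. Unset Printing Implicit Defensive.
Import Order.TTheory GRing.Theory Num.Theory.
Local Open Scope ring_scope.

(* Formal power series (in a formal variable, here u or hbar) are represented
   by their coefficient sequences nat -> R. *)

Definition smul (R : pzRingType) (f g : nat -> R) : nat -> R :=
  fun n => \sum_(i < n.+1) f i * g (n - i)%N.

Definition sone (R : pzRingType) : nat -> R := fun n => if n == 0%N then 1 else 0.

Definition spow (R : pzRingType) (f : nat -> R) (m : nat) : nat -> R :=
  iter m (smul f) (@sone R).

(* Coefficient of u^n in S(u) = (e^{u/2} - e^{-u/2})/u :
   e^{u/2} - e^{-u/2} = sum_m ((1/2)^m - (-1/2)^m)/m! u^m, divided by u. *)
Definition Scoef (n : nat) : algC :=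
  ((1/2) ^+ n.+1 - (- (1/2)) ^+ n.+1) / (n.+1)`!%:R.

(* S(u) as a series in u with coefficients in C[v]. *)
Definition S_ser : nat -> {poly algC} := fun n => (Scoef n)%:P.

(* S(v u) as a series in u with coefficients in C[v]. *)
Definition Sv_ser : nat -> {poly algC} := fun n => Scoef n *: 'X^n.

(* Functions of y are modelled in {poly {poly algC}}: the outer variable is
   t = 1/(y - A), the inner one is v.  The derivation d/dy acts on a
   polynomial p(t) by the chain rule: d/dy p(t) = p'(t) * dt/dy = -t^2 p'(t). *)
Definition Dy (p : {poly {poly algC}}) : {poly {poly algC}} := - ('X ^+ 2 * p^`()).

(* (d/dy)^n log(y - A) for n >= 1, i.e. (d/dy)^(n-1) (1/(y-A)). *)
Definition dlog (n : nat) : {poly {poly algC}} := iter n.-1 Dy 'X.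

Definition vvar : {poly {poly algC}} := ('X : {poly algC})%:P.

(* Given Q = S(v u)/S(u) (coefficient sequence in u), the exponent
     v (Q(hbar d/dy) - 1) log(y - A) = sum_{n>=1} hbar^n v Q_n (d/dy)^n log(y-A)
   as a series in hbar (the n = 0 term is (Q_0 - 1) log(y-A) = 0, as Q_0 = 1). *)
Definition Expo (Q : nat -> {poly algC}) : nat -> {poly {poly algC}} :=
  fun n => if n == 0%N then 0 else vvar * (Q n)%:P * dlog n.

(* Coefficient of hbar^n in exp(Expo Q) = sum_m (Expo Q)^m / m!
   (the sum is finite in each degree since Expo Q has no constant term). *)
Definition cexp (Q : nat -> {poly algC}) (n : nat) : {poly {poly algC}} :=
  \sum_(m < n.+1) (((m`!)%:R)^-1 : algC)%:P%:P * spow (Expo Q) m n.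

(* Main.v *)
Require Import Defs.
From mathcomp Require Import all_boot all_order all_algebra all_field.
From mathcomp Require Import ring zify.
Set Implicit Arguments. Unset Strict Implicit. Unset Printing Implicit Defensive.
Import GRing.Theory Num.Theory.
Local Open Scope ring_scope.

Section Seqs.
Variable R : comNzRingType.
Implicit Types f g h : nat -> R.

Definition Dser f : nat -> R := fun n => n%:R * f n.
Definition sadd f g : nat -> R := fun n => f n + g n.

Lemma smul_poly f g n N : (n < N)%N ->
  smul f g n = (\poly_(i < N) f i * \poly_(i < N) g i)`_n.
Proof.
move=> hn; rewrite coefM /smul; apply: eq_bigr => i _.
rewrite !coef_poly; have hi : (i < N)%N by apply: leq_ltn_trans hn; rewrite -ltnS.
by rewrite hi (leq_ltn_trans (leq_subr _ _) hn).
Qed.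

Lemma smul_ext f1 f2 g1 g2 n : (forall i, (i <= n)%N -> f1 i = f2 i) ->
  (forall i, (i <= n)%N -> g1 i = g2 i) -> smul f1 g1 n = smul f2 g2 n.
Proof.
move=> hf hg; apply: eq_bigr => i _; rewrite hf ?hg //; first exact: leq_subr.
by rewrite -ltnS.
Qed.

Lemma smulC f g n : smul f g n = smul g f n.
Proof. by rewrite !(smul_poly _ _ (ltnSn n)) mulrC. Qed.

Lemma smulA f g h n : smul (smul f g) h n = smul f (smul g h) n.
Proof.
rewrite (smul_poly _ _ (ltnSn n)) [RHS](smul_poly _ _ (ltnSn n)).
have -> : \poly_(i < n.+1) smul f g i = \poly_(i < n.+1) ((\poly_(i < n.+1) f i * \poly_(i < n.+1) g i)`_i).
  apply/polyP => i; rewrite !coef_poly; case: ifP => // hi; exact: smul_poly.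
have -> : \poly_(i < n.+1) smul g h i = \poly_(i < n.+1) ((\poly_(i < n.+1) g i * \poly_(i < n.+1) h i)`_i).
  apply/polyP => i; rewrite !coef_poly; case: ifP => // hi; exact: smul_poly.
set P := fun p : {poly R} => \poly_(i < n.+1) p`_i.
have HP : forall p q : {poly R}, (P p * q)`_n = (p * q)`_n.
  move=> p q; rewrite !coefM; apply: eq_bigr => i _; rewrite coef_poly.
  by rewrite (leq_ltn_trans _ (ltnSn n)) // -ltnS.
have HP' : forall p q : {poly R}, (p * P q)`_n = (p * q)`_n.
  by move=> p q; rewrite mulrC HP mulrC.
by rewrite HP HP' mulrA.
Qed.

Lemma smulDl f g h n : smul (sadd f g) h n = smul f h n + smul g h n.
Proof. by rewrite /smul /sadd -big_split; apply: eq_bigr => i _; rewrite mulrDl. Qed.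

Lemma smul_1r f n : smul f (@sone R) n = f n.
Proof.
rewrite /smul big_ord_recr /= subnn /sone eqxx mulr1 big1 ?add0r // => i _.
by rewrite subn_eq0 leqNgt ltn_ord mulr0.
Qed.

Lemma smul_1l f n : smul (@sone R) f n = f n.
Proof. by rewrite smulC smul_1r. Qed.

Lemma D_smul f g n : Dser (smul f g) n = smul (Dser f) g n + smul f (Dser g) n.
Proof.
rewrite /Dser /smul -big_split mulr_sumr; apply: eq_bigr => i _ /=.
have hi : (i <= n)%N by rewrite -ltnS.
by rewrite -{1}(subnKC hi) natrD; ring.
Qed.

Lemma D_sone n : Dser (@sone R) n = 0.
Proof. by rewrite /Dser /sone; case: n => [|n] /=; rewrite ?mulr0 ?mul0r. Qed.


Lemma smul_scal_r f g c n : smul f (fun k => c * g k) n = c * smul f g n.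
Proof. by rewrite /smul mulr_sumr; apply: eq_bigr => i _; ring. Qed.

Lemma smul_scal_l f g c n : smul (fun k => c * f k) g n = c * smul f g n.
Proof. by rewrite /smul mulr_sumr; apply: eq_bigr => i _; ring. Qed.

Lemma smul0r g n : smul (fun _ => 0) g n = 0.
Proof. by rewrite /smul big1 // => i _; rewrite mul0r. Qed.

Lemma smulr0 g n : smul g (fun _ => 0) n = 0.
Proof. by rewrite smulC smul0r. Qed.

Lemma spow_low (E : nat -> R) : E 0%N = 0 -> forall m n, (n < m)%N -> spow E m n = 0.
Proof.
move=> E0; elim=> [|m IH] n //= hn.
rewrite /smul big1 // => i _; case: i => [[|i]] /= hi.
  by rewrite E0 mul0r.
by rewrite IH ?mulr0 //; lia.
Qed.

Lemma D_spow (E : nat -> R) m n : Dser (spow E m.+1) n = m.+1%:R * smul (Dser E) (spow E m) n.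
Proof.
elim: m n => [|m IH] n.
  rewrite /= D_smul mul1r (@smul_ext E E (Dser (@sone R)) (fun _ => 0)) //.
    by rewrite smulr0 addr0.
  by move=> i _; rewrite D_sone.
rewrite [spow _ _]/= -/(spow E m.+1) D_smul.
rewrite (@smul_ext E E (Dser (spow E m.+1)) (fun k => m.+1%:R * smul (Dser E) (spow E m) k)) //.
rewrite smul_scal_r -!smulA (@smul_ext (smul E (Dser E)) (smul (Dser E) E) (spow E m) (spow E m)) //; last by move=> i _; rewrite smulC.
by rewrite [m.+2%:R]mulrS mulrDl mul1r.
Qed.

Lemma sum_widen0 (G : nat -> R) n1 n2 : (n1 <= n2)%N ->
  (forall m, (n1 <= m)%N -> G m = 0) ->
  \sum_(m < n1) G m = \sum_(m < n2) G m.
Proof.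
move=> hn hG; rewrite (big_ord_widen _ _ hn) big_mkcond; apply: eq_bigr => i _.
by case: ifP => // /negbT; rewrite -leqNgt => /hG ->.
Qed.

Lemma cexp_deriv (w : nat -> R) (E : nat -> R) :
  (forall m, m.+1%:R * w m.+1 = w m) -> E 0%N = 0 ->
  forall n, Dser (fun n => \sum_(m < n.+1) w m * spow E m n) n =
            smul (Dser E) (fun n => \sum_(m < n.+1) w m * spow E m n) n.
Proof.
move=> hw E0 n.
have DE0 : Dser E 0 = 0 by rewrite /Dser E0 mulr0.
transitivity (\sum_(m < n) w m * smul (Dser E) (spow E m) n).
  rewrite {1}/Dser mulr_sumr big_ord_recl /=.
  have -> : n%:R * (w 0%N * sone R n) = 0.
    by case: n => [|n]; rewrite /sone /= ?mul0r ?mulr0.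
  rewrite add0r; apply: eq_bigr => i _.
  rewrite /bump /= add1n add0n.
  change (n%:R * (w i.+1 * spow E i.+1 n) = w i * smul (Dser E) (spow E i) n).
  rewrite mulrCA; have := D_spow E i n; rewrite {1}/Dser => ->.
  by rewrite -(hw i); ring.
rewrite /smul.
transitivity (\sum_(i < n.+1) \sum_(m < n) w m * (Dser E i * spow E m (n - i))).
  rewrite exchange_big /=; apply: eq_bigr => m _; rewrite mulr_sumr.
  by apply: eq_bigr => i _.
apply: eq_bigr => -[[|i] hi] _ /=.
  by rewrite DE0 big1 ?mul0r // => m _; rewrite mul0r mulr0.
rewrite mulr_sumr (@sum_widen0 (fun m => Dser E i.+1 * (w m * spow E m (n - i.+1))) (n - i.+1).+1 n).
- by apply: eq_bigr => m _; ring.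
- lia.
- by move=> m hm; rewrite spow_low ?mulr0 //.
Qed.


Lemma div_uniq (s q1 q2 : nat -> R) : s 0%N = 1 ->
  (forall n, smul s q1 n = smul s q2 n) -> forall n, q1 n = q2 n.
Proof.
move=> s0 hs; elim/ltn_ind => n IH.
have := hs n; rewrite /smul !big_ord_recl s0 !mul1r subn0.
rewrite [X in _ + X = _](eq_bigr (fun i : 'I_n => s (lift ord0 i) * q2 (n - lift ord0 i)%N)).
  by move/(addIr _).
move=> i _; rewrite IH //= /bump /=; case: n IH hs i => [|n] IH hs i.
  by case: i.
lia.
Qed.

Definition lin (a : R) : {poly R} := 1 + a%:P * 'X.
Definition cL (a : R) : nat -> R := fun i => if i is 0 then 0 else - (- a) ^+ i.
Definition coefs (p : {poly R}) : nat -> R := fun k => p`_k.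

Lemma coefs_mul p q n : coefs (p * q) n = smul (coefs p) (coefs q) n.
Proof. by rewrite /coefs coefM. Qed.

Lemma coefs_lin a k : coefs (lin a) k = (k == 0%N)%:R + a * (k == 1%N)%:R.
Proof. by rewrite /coefs /lin coefD coef1 coefCM coefX. Qed.

Lemma newton_lin a n : Dser (coefs (lin a)) n = smul (cL a) (coefs (lin a)) n.
Proof.
rewrite smulC /Dser; case: n => [|[|n]].
- rewrite /smul big_ord_recl big_ord0 /= !coefs_lin /=; ring.
- rewrite /smul !big_ord_recl big_ord0 /= !coefs_lin /=; ring.
- rewrite /smul !big_ord_recl /= big1.
    rewrite !coefs_lin /= /bump /= !subSS subn0 exprS; ring.
  move=> i _; rewrite coefs_lin /bump /=; ring.
Qed.

Definition Pprod (a : nat -> R) m : {poly R} := \prod_(j < m) lin (a j).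
Definition cN (a : nat -> R) m : nat -> R :=
  fun i => if i is 0 then 0 else - \sum_(j < m) (- a j) ^+ i.

Lemma newton_prod a m n :
  Dser (coefs (Pprod a m)) n = smul (cN a m) (coefs (Pprod a m)) n.
Proof.
elim: m n => [|m IH] n.
  rewrite /Pprod big_ord0 /Dser /coefs coef1 /smul big1.
    by case: n => [|n]; rewrite ?mul0r ?mulr0.
  by move=> [[|i] hi] _; rewrite /cN /= ?big_ord0 ?oppr0 mul0r.
rewrite /Pprod big_ord_recr /= -/(Pprod a m).
set p := Pprod a m; set l := lin (a m).
rewrite {1}/Dser coefs_mul -/(Dser (smul (coefs p) (coefs l)) n) D_smul.
rewrite (@smul_ext (Dser (coefs p)) (smul (cN a m) (coefs p)) (coefs l) (coefs l)); last 2 first.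
- by move=> i _; rewrite IH.
- by [].
rewrite (@smul_ext (coefs p) (coefs p) (Dser (coefs l)) (smul (cL (a m)) (coefs l))); last 2 first.
- by [].
- by move=> i _; rewrite newton_lin.
rewrite smulA (@smul_ext (coefs p) (coefs p) (smul (cL (a m)) (coefs l)) (smul (coefs l) (cL (a m)))); last 2 first.
- by [].
- by move=> i _; rewrite smulC.
rewrite -(smulA (coefs p)) (smulC (smul (coefs p) (coefs l)) (cL (a m))) -smulDl.
apply: smul_ext => i _.
  rewrite /sadd /cN /cL; case: i => [|i]; first by rewrite addr0. rewrite big_ord_recr /=; ring.
by rewrite coefs_mul.
Qed.

Lemma Pprod_size a m : (size (Pprod a m) <= m.+1)%N.
Proof.
elim: m => [|m IH]; first by rewrite /Pprod big_ord0 size_poly1.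
rewrite /Pprod big_ord_recr /= -/(Pprod a m).
apply: (leq_trans (size_mul_leq _ _)).
have : (size (lin (a m)) <= 2)%N.
  rewrite /lin; apply: (leq_trans (size_polyD _ _)); rewrite geq_max size_poly1 /=.
  by apply: (leq_trans (size_mul_leq _ _)); rewrite size_polyX; case: (size _) (size_polyC_leq1 (a m)) => [|[|]].
lia.
Qed.

Lemma Pprod0 a m : coefs (Pprod a m) 0%N = 1.
Proof.
elim: m => [|m IH]; first by rewrite /Pprod big_ord0 /coefs coef1.
rewrite /Pprod big_ord_recr /= -/(Pprod a m) /coefs coef0M.
by move: IH; rewrite /coefs => ->; rewrite /lin coefD coef1 coefCM coefX mulr0 addr0 mulr1.
Qed.

End Seqs.

Section Uniq.
Variable R : numFieldType.

Lemma rec_uniq (c g h : nat -> R) : c 0%N = 0 -> g 0%N = h 0%N ->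
  (forall n, Dser g n = smul c g n) -> (forall n, Dser h n = smul c h n) ->
  forall n, g n = h n.
Proof.
move=> c0 gh0 hg hh; elim/ltn_ind => -[|n] IH //.
have e : smul c g n.+1 = smul c h n.+1.
  rewrite /smul big_ord_recl [in RHS]big_ord_recl c0 !mul0r !add0r.
  apply: eq_bigr => i _; rewrite IH //; change (n.+1 - i.+1 < n.+1)%N; lia.
have := hg n.+1; rewrite e -hh /Dser; apply: mulfI.
by rewrite pnatr_eq0.
Qed.

Lemma rec_zero (c g : nat -> R) : (forall i, c i = 0) ->
  (forall n, Dser g n = smul c g n) -> forall n, (0 < n)%N -> g n = 0.
Proof.
move=> c0 hg [|n] // _; apply/eqP; have := hg n.+1.
rewrite /Dser /smul big1; last by move=> i _; rewrite c0 mul0r.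
by move/eqP; rewrite mulf_eq0 pnatr_eq0.
Qed.

End Uniq.

Notation PP := {poly {poly algC}}.

Lemma Scoef0 : Scoef 0 = 1.
Proof. by rewrite /Scoef /= !expr1 opprK (_ : 1`! = 1)%N // divr1; field. Qed.

Lemma Scoef_odd n : odd n -> Scoef n = 0.
Proof.
move=> hn; rewrite /Scoef exprNn.
have -> : (-1 : algC) ^+ n.+1 = 1.
  by rewrite -signr_odd /= hn.
by rewrite !mul1r subrr mul0r.
Qed.

Lemma Q_odd (Q : nat -> {poly algC}) :
  (forall n, smul S_ser Q n = Sv_ser n) -> forall n, odd n -> Q n = 0.
Proof.
move=> hQ; elim/ltn_ind => n IH hn.
have := hQ n; rewrite /smul big_ord_recl /S_ser Scoef0 subn0 mul1r.
rewrite big1; last first.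
  move=> i _; change (lift ord0 i : nat) with i.+1.
  case hi: (odd i.+1); first by rewrite Scoef_odd // mul0r.
  rewrite IH ?mulr0 //; first by have := ltn_ord i; lia.
  by rewrite oddB ?hn ?hi //; have := ltn_ord i; lia.
by rewrite addr0 /Sv_ser Scoef_odd // scale0r.
Qed.

Lemma dlog_form n :
  dlog n.+1 = (((-1) ^+ n * (n`!)%:R : algC)%:P%:P) * 'X^(n.+1).
Proof.
elim: n => [|n IH]; first by rewrite /dlog /= expr0 mul1r fact0 mulr1n !polyC1 mul1r expr1.
rewrite /dlog /= -/(dlog n.+1) IH /Dy.
rewrite derivM derivC mul0r add0r derivXn /= -[_ *+ n.+1]mulr_natr factS natrM exprS.
have -> : 'X^(n.+2) = 'X^2 * 'X^n :> PP by rewrite -exprD add2n.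
rewrite ?mul1r !polyCM !polyC_natr !rmorphXn !rmorphN1 expr1 exprS. ring.
Qed.

Definition ee (Q : nat -> {poly algC}) (n : nat) : {poly algC} :=
  if n is n'.+1 then 'X * Q n * ((-1) ^+ n' * (n'`!)%:R)%:P else 0.

Lemma Expo_form Q n : Expo Q n = (ee Q n)%:P * 'X^n.
Proof.
case: n => [|n]; first by rewrite /Expo /= polyC0 mul0r.
rewrite /Expo /= dlog_form /vvar !polyCM; ring.
Qed.

Lemma hom_term (i n : nat) (a b : {poly algC}) : (i <= n)%N ->
  (i%:R * (a%:P * 'X^i)) * (b%:P * 'X^(n - i)) = (i%:R * a * b)%:P * ('X^n : PP).
Proof.
move=> hi; rewrite -[in RHS](subnKC hi) exprD !polyCM polyC_natr; ring.
Qed.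

Definition ww (m : nat) : PP := (((m`!)%:R^-1 : algC)%:P%:P).

Lemma ww_rec m : m.+1%:R * ww m.+1 = ww m.
Proof.
rewrite /ww -!polyC_natr -!polyCM factS natrM invfM mulrA divff ?mul1r //.
by rewrite pnatr_eq0.
Qed.

Lemma cexp_D Q n : Dser (cexp Q) n = smul (Dser (Expo Q)) (cexp Q) n.
Proof.
exact: (@cexp_deriv _ ww (Expo Q) ww_rec (erefl _) n).
Qed.

Lemma cexp0 Q : cexp Q 0 = 1.
Proof. by rewrite /cexp big_ord1 /= fact0 invr1 !polyC1 mul1r. Qed.

Lemma cexp_hom Q n : cexp Q n = ((cexp Q n)`_n)%:P * 'X^n.
Proof.
elim/ltn_ind: n => -[|n] IH.
  by rewrite cexp0 coef1 /= polyC1 mul1r expr0.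
suff [c hc] : exists c, cexp Q n.+1 = c%:P * 'X^(n.+1).
  by rewrite {2}hc coefMXn ltnn subnn coefC /= -hc.
have := cexp_D Q n.+1; rewrite /Dser /smul.
rewrite (eq_bigr (fun i : 'I_n.+2 => (i%:R * ee Q i * (cexp Q (n.+1 - i))`_(n.+1 - i))%:P * 'X^(n.+1))); last first.
  move=> [[|i] hi] _ /=.
    by rewrite !mulr0n !mul0r ?polyC0 ?mul0r.
  rewrite Expo_form {1}[cexp Q (n.+1 - i.+1)]IH; last by lia.
  by rewrite hom_term.
rewrite -mulr_suml -rmorph_sum => h.
exists (((n.+1%:R : algC)^-1)%:P * \sum_(i < n.+2) i%:R * ee Q i * (cexp Q (n.+1 - i))`_(n.+1 - i)).
rewrite polyCM -mulrA -h mulrA.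
have -> : (n.+1%:R : PP) = ((n.+1%:R : algC)%:P)%:P by rewrite !polyC_natr.
rewrite -!polyCM mulVf ?pnatr_eq0 //.
by rewrite !polyC1 mul1r.
Qed.

Definition ff Q n : {poly algC} := (cexp Q n)`_n.

Lemma polyC_natr2 n : (n%:R : PP) = ((n%:R : algC)%:P)%:P.
Proof. by rewrite !polyC_natr. Qed.

Lemma ff_rec Q n : Dser (ff Q) n = smul (Dser (ee Q)) (ff Q) n.
Proof.
have := cexp_D Q n; rewrite /Dser /smul {1}cexp_hom.
rewrite (eq_bigr (fun i : 'I_n.+1 => (i%:R * ee Q i * ff Q (n - i))%:P * 'X^n)); last first.
  move=> i _; rewrite Expo_form {1}cexp_hom hom_term //; by rewrite -ltnS.
rewrite -mulr_suml -rmorph_sum => h.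
rewrite polyC_natr2 mulrA -polyCM in h.
have := congr1 (fun p : PP => p`_n) h.
rewrite !coefMXn ltnn subnn !coefC /= polyC_natr => ->.
by [].
Qed.

Lemma ff0 Q : ff Q 0 = 1.
Proof. by rewrite /ff cexp0 coef1. Qed.

Lemma natr_neq0P n : (0 < n)%N -> (n%:R : {poly algC}) != 0.
Proof. by move=> hn; rewrite -polyC_natr polyC_eq0 pnatr_eq0 -lt0n. Qed.

Lemma ee_odd Q : (forall n, smul S_ser Q n = Sv_ser n) -> forall i, odd i -> ee Q i = 0.
Proof.
move=> hQ [|i] // hi; by rewrite /ee Q_odd // mulr0 mul0r.
Qed.

Lemma ff_odd Q : (forall n, smul S_ser Q n = Sv_ser n) -> forall n, odd n -> ff Q n = 0.
Proof.
move=> hQ; elim/ltn_ind => n IH hn.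
have := ff_rec Q n; rewrite /Dser /smul big1.
  by move/eqP; rewrite mulf_eq0 (negbTE (natr_neq0P _)) ?orFb => [/eqP//|]; case: n hn {IH}.
move=> [i hi] _ /=.
case hio: (odd i); first by rewrite ee_odd // mulr0 mul0r.
case: i hi hio => [|i] hi hio; first by rewrite mul0r mul0r.
rewrite IH ?mulr0 //; first lia.
by rewrite oddB ?hn ?hio //; lia.
Qed.

Lemma ff_eval_rec Q (x : algC) n :
  Dser (fun k => (ff Q k).[x]) n = smul (fun i => i%:R * (ee Q i).[x]) (fun k => (ff Q k).[x]) n.
Proof.
have := congr1 (horner^~ x) (ff_rec Q n); rewrite /Dser /smul /= -polyC_natr hornerCM => ->.
rewrite horner_sum; apply: eq_bigr => i _.
by rewrite hornerM -polyC_natr hornerCM.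
Qed.

Lemma smul_eval (s : nat -> algC) (Q : nat -> {poly algC}) x n :
  (smul (fun i => (s i)%:P) Q n).[x] = smul s (fun i => (Q i).[x]) n.
Proof. by rewrite /smul horner_sum; apply: eq_bigr => i _; rewrite hornerCM. Qed.

Lemma Qeval Q x : (forall n, smul S_ser Q n = Sv_ser n) ->
  forall n, smul Scoef (fun i => (Q i).[x]) n = Scoef n * x ^+ n.
Proof.
move=> hQ n; rewrite -smul_eval; have := hQ n; rewrite /S_ser => ->.
by rewrite /Sv_ser hornerZ hornerXn.
Qed.

Lemma root_0 Q n : (0 < n)%N -> (ff Q n).[0] = 0.
Proof.
move=> hn; apply: (@rec_zero _ (fun i => i%:R * (ee Q i).[0]) (fun k => (ff Q k).[0]) _ (ff_eval_rec Q 0) n hn).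
by move=> [|i]; rewrite /= ?mul0r // !hornerM hornerX mul0r mul0r mulr0.
Qed.

Lemma root_m1 Q n : (forall n, smul S_ser Q n = Sv_ser n) -> (0 < n)%N -> (ff Q n).[-1] = 0.
Proof.
move=> hQ hn.
have hq : forall i, (Q i).[-1] = sone algC i.
  apply: (div_uniq (s := Scoef)); first exact: Scoef0.
  move=> k; rewrite Qeval // smul_1r.
  case hk: (odd k); first by rewrite Scoef_odd // mul0r.
  by rewrite -signr_odd hk mulr1.
apply: (@rec_zero _ (fun i => i%:R * (ee Q i).[-1]) (fun k => (ff Q k).[-1]) _ (ff_eval_rec Q (-1)) n hn).
by move=> [|i]; rewrite /= ?mul0r // !hornerM hq /sone /= mulr0 mul0r mulr0.
Qed.

Lemma Tlem (a : algC) n :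
  \sum_(i < n.+1) Scoef i * (a ^+ (n - i) / (n - i)`!%:R) =
  ((a + 1/2) ^+ n.+1 - (a - 1/2) ^+ n.+1) / (n.+1)`!%:R.
Proof.
rewrite !exprDn -sumrB [in RHS]big_ord_recl /= !expr0 subrr add0r mulr_suml.
apply: eq_bigr => i _; rewrite /bump leq0n add1n.
have hi : (i <= n)%N by rewrite -ltnS.
have hF := bin_fact (leq_trans (ltn_ord i) (leqnn n.+1)).
rewrite subSS in hF.
have e : ((n.+1)`!%:R : algC) = ('C(n.+1, i.+1))%:R * ((i.+1)`!%:R * (n - i)`!%:R).
  by rewrite -!natrM hF. 
have h1 : ('C(n.+1, i.+1)%:R : algC) != 0 by rewrite pnatr_eq0 -lt0n bin_gt0.
have h2 : ((i.+1)`!%:R : algC) != 0 by rewrite pnatr_eq0 -lt0n fact_gt0.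
have h3 : ((n - i)`!%:R : algC) != 0 by rewrite pnatr_eq0 -lt0n fact_gt0.
move: ((n.+1)`!) e => N e. rewrite e subSS /Scoef.
move: ('C(n.+1, i.+1)) h1 => K h1. rewrite -mulrnBl -[_ *+ K]mulr_natr.
move: (K%:R : algC) h1 => k h1. move: ((i.+1)`!%:R : algC) h2 => f2 h2.
move: ((n - i)`!%:R : algC) h3 => f3 h3. field. by rewrite h1 h2 h3.
Qed.

Lemma telesc (u : nat -> algC) m : \sum_(l < m) (u l - u l.+1) = u 0%N - u m.
Proof.
elim: m => [|m IH]; first by rewrite big_ord0 subrr.
by rewrite big_ord_recr /= IH addrA subrK.
Qed.

Section RootM.
Variable m : nat.
Hypothesis hm : (0 < m)%N.

Definition aa (l : nat) : algC := (m%:R - 1) / 2 - l%:R.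
Definition rr (n : nat) : algC := (\sum_(l < m) aa l ^+ n) / (m%:R * (n`!)%:R).

Lemma mR0 : (m%:R : algC) != 0.
Proof. by rewrite pnatr_eq0 -lt0n. Qed.

Lemma rr_div n : smul Scoef rr n = Scoef n * m%:R ^+ n.
Proof.
rewrite /smul /rr.
transitivity ((m%:R)^-1 * \sum_(l < m) \sum_(i < n.+1) Scoef i * (aa l ^+ (n - i) / (n - i)`!%:R)).
  rewrite exchange_big mulr_sumr; apply: eq_bigr => i _ /=.
  rewrite !mulr_suml !mulr_sumr; apply: eq_bigr => l _.
  rewrite invfM; ring.
rewrite (eq_bigr (fun l : 'I_m => ((aa l + 1/2) ^+ n.+1 - (aa l - 1/2) ^+ n.+1) / (n.+1)`!%:R)); last by move=> l _; rewrite Tlem.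
rewrite -mulr_suml.
pose u := fun l : nat => (m%:R / 2 - l%:R : algC) ^+ n.+1.
rewrite (eq_bigr (fun l : 'I_m => u l - u l.+1)); last first.
  move=> l _; rewrite /u /aa -natr1; congr (_ ^+ _ - _ ^+ _); by field.
rewrite telesc /u subr0.
have -> : (m%:R / 2 - m%:R : algC) = m%:R * (- (1/2)) by field.
rewrite /Scoef !exprMn -mulrBr exprS.
have h2 : (((n.+1)`!)%:R : algC) != 0 by rewrite pnatr_eq0 -lt0n fact_gt0.
have := mR0 => hm0.
rewrite expr1n mul1r; move: ((n.+1)`!%:R : algC) h2 => F h2.
field. by rewrite ?h2 ?hm0.
Qed.

Lemma Q_at_m Q : (forall n, smul S_ser Q n = Sv_ser n) -> forall i, (Q i).[m%:R] = rr i.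
Proof.
move=> hQ; apply: (div_uniq (s := Scoef)); first exact: Scoef0.
by move=> k; rewrite Qeval // rr_div.
Qed.

Lemma c_at_m Q : (forall n, smul S_ser Q n = Sv_ser n) ->
  forall i, i%:R * (ee Q i).[m%:R] = cN aa m i.
Proof.
move=> hQ [|i]; first by rewrite mul0r.
rewrite /ee !hornerM hornerX hornerC Q_at_m // /rr /cN.
rewrite -sumrN.
rewrite [RHS](eq_bigr (fun l : 'I_m => (-1) ^+ i * aa l ^+ i.+1)); last first.
  by move=> l _; rewrite (exprNn (aa l)) !exprS; ring.
rewrite -mulr_sumr factS natrM.
have h2 : ((i`!)%:R : algC) != 0 by rewrite pnatr_eq0 -lt0n fact_gt0.
have h3 : ((i.+1)%:R : algC) != 0 by rewrite pnatr_eq0.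
have := mR0 => hm0.
move: (i`!%:R : algC) h2 => F h2; move: (i.+1%:R : algC) h3 => I h3.
field. by rewrite ?h2 ?h3 ?hm0.
Qed.

Lemma root_m Q n : (forall n, smul S_ser Q n = Sv_ser n) -> (m < n)%N -> (ff Q n).[m%:R] = 0.
Proof.
move=> hQ hn.
have e := @rec_uniq _ (cN aa m) (fun k => (ff Q k).[m%:R]) (coefs (Pprod aa m)) (erefl _).
rewrite e.
- rewrite /coefs nth_default //; apply: leq_trans (Pprod_size _ _) hn.
- by rewrite ff0 hornerC Pprod0.
- move=> k; rewrite ff_eval_rec; apply: smul_ext => // i _; exact: c_at_m.
- exact: newton_prod.
Qed.

End RootM.

Unset Implicit Arguments.
Theorem lemma4p1 (Q : nat -> {poly algC})
  (hQ : forall n, smul S_ser Q n = Sv_ser n) :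
  cexp Q 0 = 1 /\
  (forall k, cexp Q k.*2.+1 = 0) /\
  (forall k, (0 < k)%N ->
     exists p : {poly algC},
       cexp Q k.*2 =
         ((\prod_(i < k.*2.+1) ('X - (i%:R - 1)%:P)) * p)%:P * 'X ^+ k.*2).
Proof.
split; first exact: cexp0.
split.
  move=> k; rewrite cexp_hom -/(ff Q _) ff_odd //; first by rewrite polyC0 mul0r.
  by rewrite /= odd_double.
move=> k hk.
set rs := [seq (i%:R - 1 : algC) | i <- iota 0 k.*2.+1].
have [q hq] : exists q, ff Q k.*2 = q * \prod_(z <- rs) ('X - z%:P).
  apply: uniq_roots_prod_XsubC.
    apply/allP => z /mapP [i]; rewrite mem_iota add0n => /andP [_ hi] ->.
    rewrite /root; apply/eqP.
    case: i hi => [|[|i]] hi.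
    - by rewrite sub0r root_m1 //; rewrite double_gt0.
    - by rewrite subrr root_0 // double_gt0.
    - rewrite -natr1 addrK root_m //; lia.
  rewrite uniq_rootsE map_inj_uniq ?iota_uniq // => i j /addIr /eqP.
  by rewrite eqr_nat => /eqP.
exists q.
rewrite cexp_hom -/(ff Q _) hq [q * _]mulrC /rs big_map.
have -> : iota 0 k.*2.+1 = index_iota 0 k.*2.+1 by rewrite /index_iota subn0.
by rewrite big_mkord.
Qed.
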